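(* Let $d\geq3$ and $h\geq 2$. Then \[ \nu_2(T'(d,h))=\begin{cases}\dfrac{2\big((d-1)^{h+1}-(d-1)\big)}{(d-1)^2-1} & \text{if } h \text{ is even},\\[2ex] \dfrac{2\big((d-1)^{h+1}-1\big)}{(d-1)^2-1} & \text{if } h \text{ is odd}.\end{cases} \]
   Context: $T'(d,h)$ is the rooted tree of depth $h$ in which the root has $d-1$ children, every non-root vertex at depth less than $h$ has $d-1$ children (so degree $d$), and all leaves are at depth $h$ (equivalently, the $d$-regular tree of depth $h$ with one principal branch of the root deleted). A $2$-matching of a graph is a set of edges such that every vertex is incident to at most two of them; $\nu_2(G)$ is the maximum size of a $2$-matching of $G$. *)

(* Defs.v *)
From mathcomp Require Import all_boot.
Set Implicit Arguments. Unset Strict Implicit. Unset Printing Implicit Defensive.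

Section Graph.
Variable T : finType.
Variable e : rel T.

Definition is_edge (E : {set T}) : bool :=
  [exists x, exists y, [&& x != y, e x y & E == [set x; y]]].

Definition two_matching (M : {set {set T}}) : bool :=
  [forall E in M, is_edge E] && [forall v, #|[set E in M | v \in E]| <= 2].

Definition nu2 : nat := \max_(M : {set {set T}} | two_matching M) #|M|.
End Graph.

(* The tree T'(d,h): vertices are words over {0,..,d-2} (the d-1 child labels)
   of length at most h; the root is the empty word, and a word u is adjacent to
   v iff v = u ++ [:: i] for some i or vice versa (parent/child). *)
Definition Tvert (d h : nat) : finType := {bseq h of 'I_(d.-1)}.

Definition parent_of (d h : nat) (u v : Tvert d h) : bool :=
  (size (v : seq _) == (size (u : seq _)).+1) &&
  ((u : seq _) == take (size (u : seq _)) (v : seq _)).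

Definition Tadj (d h : nat) : rel (Tvert d h) :=
  fun u v => parent_of u v || parent_of v u.

(* Main.v *)
Require Import Defs.
From mathcomp Require Import all_boot zify.
Set Implicit Arguments. Unset Strict Implicit. Unset Printing Implicit Defensive.

Section Tree.
Variables n h : nat.
Notation m := n.+2.
Notation T := (Tvert n.+3 h).
Implicit Types (u v : T) (b : bool).

Definition center (u : T) := odd (h + size u).
Definition bit (b : bool) : 'I_m := if b then Ordinal (isT : 1 < m) else ord0.
Definition child (u : T) (b : bool) : T := insubd u (rcons (u : seq _) (bit b)).

Lemma center_lt u : center u -> size u < h.
Proof.
rewrite /center ltn_neqAle size_bseq andbT => H; apply/eqP => E.
by move: H; rewrite E addnn odd_double.
Qed.

Lemma childE u b : size u < h -> val (child u b) = rcons (u : seq _) (bit b).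
Proof. by move=> H; rewrite /child insubdK // -topredE /= size_rcons. Qed.

Lemma center_succ u v : size v = (size u).+1 -> center v = ~~ center u.
Proof. by rewrite /center => ->; rewrite addnS. Qed.

Lemma size_child u b : center u -> size (child u b) = (size u).+1.
Proof. by move=> /center_lt H; rewrite (childE b H) size_rcons. Qed.

Lemma center_child u b : center u -> center (child u b) = false.
Proof. by move=> H; rewrite (center_succ (size_child b H)) H. Qed.

Lemma child_inj u1 u2 b1 b2 : center u1 -> center u2 ->
  child u1 b1 = child u2 b2 -> u1 = u2 /\ b1 = b2.
Proof.
move=> H1 H2 /(congr1 val); rewrite !childE ?center_lt //.
move=> /rcons_inj [] /val_inj -> E; split => //.
by case: b1 b2 E => -[] // /(congr1 val).
Qed.

Lemma child_neq u b : center u -> u != child u b.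
Proof. by move=> H; apply/eqP => E; move: (center_child b H); rewrite -E H. Qed.

Lemma parent_child u b : center u -> parent_of u (child u b).
Proof.
move=> H; rewrite /parent_of size_child // eqxx /= childE ?center_lt //.
by rewrite -cats1 take_size_cat.
Qed.

Definition C : {set T} := [set u | center u].
Definition f (p : T * bool) : {set T} := [set p.1; child p.1 p.2].
Definition M0 := f @: setX C [set: bool].

Lemma card_M0 : #|M0| = 2 * #|C|.
Proof.
rewrite card_in_imset; first by rewrite cardsX cardsT card_bool mulnC.
move=> [u1 b1] [u2 b2]; rewrite !inE /= !andbT => H1 H2 E.
have Eu : u1 = u2.
  have : u1 \in f (u2, b2) by rewrite -E !inE eqxx.
  rewrite !inE => /orP [/eqP //| /eqP Ec].
  by move: (center_child b2 H2); rewrite -Ec H1.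
subst u2.
have : child u1 b1 \in f (u1, b2) by rewrite -E !inE eqxx orbT.
rewrite !inE => /orP [/eqP Ec | /eqP Ec].
  by move: (child_neq b1 H1); rewrite Ec eqxx.
by case: (child_inj H1 H1 Ec) => _ ->.
Qed.

Lemma M0_match : two_matching (@Tadj n.+3 h) M0.
Proof.
apply/andP; split.
  apply/forall_inP => E /imsetP [[u b]]; rewrite !inE /= andbT => H ->.
  apply/existsP; exists u; apply/existsP; exists (child u b).
  by rewrite child_neq //= /Tadj parent_child // eqxx.
apply/forallP => v.
case: (boolP (center v)) => Hv.
  apply: (@leq_trans #|[set f (v, false); f (v, true)]|); last by rewrite cards2; case: (_ != _).
  apply: subset_leq_card; apply/subsetP => E; rewrite !inE => /andP [/imsetP [[u b]]].
  rewrite !inE /= andbT => Hu ->; rewrite !inE /= => /orP [/eqP Evu | /eqP Evc].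
    by rewrite -Evu; case: b; rewrite eqxx ?orbT.
  by move: (center_child b Hu); rewrite -Evc Hv.
case: (set_0Vmem [set E in M0 | v \in E]) => [-> | [E0 HE0]]; first by rewrite cards0.
apply: (@leq_trans #|[set E0]|); last by rewrite cards1.
apply: subset_leq_card; apply/subsetP => E; rewrite !inE => /andP [/imsetP [[u b]]].
rewrite !inE /= andbT => Hu ->; rewrite !inE /= => /orP [/eqP Evu | /eqP Evc]; first by move: Hv; rewrite Evu Hu.
move: HE0; rewrite !inE => /andP [/imsetP [[u' b']]].
rewrite !inE /= andbT => Hu' ->; rewrite !inE /= => /orP [/eqP Evu | /eqP Evc']; first by move: Hv; rewrite Evu Hu'.
by case: (child_inj Hu Hu' (etrans (esym Evc) Evc')) => -> ->; rewrite eqxx.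
Qed.

Lemma edge_center E : is_edge (@Tadj n.+3 h) E -> exists2 c, c \in C & c \in E.
Proof.
move=> /existsP [x /existsP [y /and3P [_ Hxy /eqP ->]]].
case/orP: Hxy => /andP [/eqP Hs _].
  case: (boolP (center x)) => Hx; first by exists x; rewrite !inE ?eqxx.
  by exists y; rewrite !inE ?eqxx ?orbT // (center_succ Hs).
case: (boolP (center y)) => Hy; first by exists y; rewrite !inE ?eqxx ?orbT.
by exists x; rewrite !inE ?eqxx // (center_succ Hs).
Qed.

Lemma upper M : two_matching (@Tadj n.+3 h) M -> #|M| <= 2 * #|C|.
Proof.
move=> /andP [/forall_inP He /forallP Hd].
rewrite -sum1_card.
apply: (@leq_trans (\sum_(E in M) \sum_(c in C) (c \in E))).
  apply: leq_sum => E /He /edge_center [c Hc HcE].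
  by rewrite (bigD1 c) //= HcE.
rewrite exchange_big /= mulnC -sum_nat_const; apply: leq_sum => c _.
apply: leq_trans (Hd c).
rewrite -sum1_card [X in X <= _]big_mkcond [X in _ <= X]big_mkcond /=.
by apply: leq_sum => E _; rewrite !inE; case: (_ \in M); case: (c \in E).
Qed.

Lemma card_size k : k <= h -> #|[set u : T | size u == k]| = m ^ k.
Proof.
move=> Hk.
pose g (t : k.-tuple 'I_m) : T := insub_bseq h (val t).
have gE t : val (g t) = val t by rewrite /g /insub_bseq insubdK // -topredE /= size_tuple.
have -> : [set u : T | size u == k] = g @: [set: k.-tuple 'I_m].
  apply/setP => u; rewrite !inE; apply/idP/imsetP.
    move=> Hu; exists (Tuple Hu); first by rewrite inE.
    by apply: val_inj; rewrite gE.
  by move=> [t _ ->]; rewrite -[size _]/(size (val (g t))) gE size_tuple.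
rewrite card_in_imset; first by rewrite cardsT card_tuple card_ord.
by move=> t1 t2 _ _ /(congr1 val); rewrite !gE => /val_inj.
Qed.

Lemma card_C : #|C| = \sum_(k < h.+1 | odd (h + k)) m ^ k.
Proof.
rewrite -sum1_card (partition_big (fun u : T => Ordinal (size_bseq u : size u < h.+1)) (fun k : 'I_h.+1 => odd (h + k))) /=; last first.
  by move=> u; rewrite inE.
apply: eq_bigr => k Hk.
have Hk' : k <= h by rewrite -ltnS.
rewrite -(card_size Hk') -sum1_card.
apply: eq_bigl => u; rewrite /C !in_set -val_eqE /=.
case E: (size u == k); rewrite ?andbF ?andbT //.
by move: Hk; rewrite /center -(eqP E).
Qed.
End Tree.
Definition G (m h k : nat) := if odd (h + k) then m ^ k else 0.
Definition Sn m h := \sum_(0 <= k < h.+1) G m h k.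

Lemma Sn_step m h : Sn m h.+2 = Sn m h + m ^ h.+1.
Proof.
rewrite /Sn big_nat_recr // big_nat_recr //=.
have -> : \sum_(0 <= k < h.+1) G m h.+2 k = \sum_(0 <= k < h.+1) G m h k.
  by apply: eq_bigr => k _; rewrite /G !addSn /= negbK.
rewrite /G !addSn !addnS /= negbK addnn odd_double /=.
by rewrite addn0.
Qed.

Lemma Sn_eq m h : m * m * Sn m h + (if odd h then 1 else m) = m ^ h.+1 + Sn m h.
Proof.
suff: forall h, (m * m * Sn m h + (if odd h then 1 else m) = m ^ h.+1 + Sn m h) /\
  (m * m * Sn m h.+1 + (if odd h.+1 then 1 else m) = m ^ h.+2 + Sn m h.+1) by move=> /(_ h) [].
elim => [|k [IH1 IH2]].
  rewrite /Sn !big_nat_recr //= !big_nil /G /=; split; [lia|].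
  rewrite expnS; lia.
split => //.
rewrite Sn_step /= negbK -[odd k]/(odd k) mulnDr.
rewrite [m ^ k.+3]expnS [m ^ k.+2]expnS.
move: IH1; rewrite !expnS; nia.
Qed.

Lemma S_formula m h : 1 < m ->
  \sum_(k < h.+1 | odd (h + k)) m ^ k = Sn m h.
Proof. by move=> _; rewrite /Sn big_mkord big_mkcond. Qed.

Lemma final m h : 1 < m ->
  2 * Sn m h = if ~~ odd h then (2 * (m ^ h.+1 - m)) %/ (m ^ 2 - 1)
                else (2 * (m ^ h.+1 - 1)) %/ (m ^ 2 - 1).
Proof.
move=> Hm; have E := Sn_eq m h.
have Hp : 0 < m ^ 2 - 1 by rewrite -mulnn; nia.
have E2 : m ^ h.+1 - (if odd h then 1 else m) = (m ^ 2 - 1) * Sn m h.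
  rewrite -mulnn mulnBl mul1n; lia.
by case: (odd h) E2 => /= ->; rewrite mulnCA mulKn.
Qed.

Theorem lemma5p4 (d h : nat) : 3 <= d -> 2 <= h ->
  nu2 (@Tadj d h) =
  if ~~ odd h then (2 * ((d - 1) ^ h.+1 - (d - 1))) %/ ((d - 1) ^ 2 - 1)
  else (2 * ((d - 1) ^ h.+1 - 1)) %/ ((d - 1) ^ 2 - 1).
Proof.
move=> Hd _; case: d Hd => [|[|[|n]]] // _.
have -> : nu2 (@Tadj n.+3 h) = 2 * #|C n h|.
  apply/eqP; rewrite eqn_leq; apply/andP; split.
    by apply/bigmax_leqP => M HM; apply: upper.
  rewrite -card_M0; exact: (leq_bigmax_cond _ (M0_match n h)).
have E : n.+3 - 1 = n.+2 by [].
rewrite E card_C S_formula //; exact: final.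
Qed.
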